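(* In the setting below, for all orthogonal modified types $\boldsymbol\mu,\boldsymbol\nu,\boldsymbol\lambda$, the polynomial $r_{\boldsymbol\mu,\boldsymbol\nu}^{\boldsymbol\lambda}\in\mathbb{Q}[x]$ has degree in $x$ at most $2(|\boldsymbol\mu|+|\boldsymbol\nu|-|\boldsymbol\lambda|)$ (so it vanishes if $|\boldsymbol\lambda|>|\boldsymbol\mu|+|\boldsymbol\nu|$).
   Context: $q$ odd prime power. $G_n(\mathbb{F}_q)$ is one of the families $O^+_{2n}$, $O^-_{2n}$, $O_{2n+1}$: the symmetry groups of the symmetric forms $\sum_{i=1}^n(x_{2i-1}y_{2i}+x_{2i}y_{2i-1})$ on $\mathbb{F}_q^{2n}$; $x_1y_1-\epsilon x_2y_2+\sum_{i=2}^n(x_{2i-1}y_{2i}+x_{2i}y_{2i-1})$ on $\mathbb{F}_q^{2n}$ ($\epsilon$ a fixed non-square); $x_1y_1+\sum_{i=1}^n(x_{2i}y_{2i+1}+x_{2i+1}y_{2i})$ on $\mathbb{F}_q^{2n+1}$, respectively, with $G_n\subset G_{n+1}$ via $g\mapsto\operatorname{diag}(g,\mathrm{Id}_2)$. Elements $g\in G_n$, $g'\in G_{n'}$ have the same orthogonal modified type if their images in some common $G_N$ are conjugate in $G_N$; a modified type is such a class, of size $|\boldsymbol\mu|=\operatorname{rank}(g-\mathrm{Id})$. $X_{\boldsymbol\mu,m}$ is the sum of elements of $G_m(\mathbb{F}_q)$ of modified type $\boldsymbol\mu$. $[m]_q=(q^m-1)/(q-1)$. The polynomials $r_{\boldsymbol\mu,\boldsymbol\nu}^{\boldsymbol\lambda}\in\mathbb{Q}[x]$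 are those with $X_{\boldsymbol\mu,m}X_{\boldsymbol\nu,m}=\sum_{\boldsymbol\lambda}r_{\boldsymbol\mu,\boldsymbol\nu}^{\boldsymbol\lambda}([m]_q)X_{\boldsymbol\lambda,m}$ for all $m\ge0$. *)

(* Defs.v *)
From HB Require Import structures.
From mathcomp Require Import all_boot all_order all_algebra.
From mathcomp Require Import boolp.
Set Implicit Arguments. Unset Strict Implicit. Unset Printing Implicit Defensive.
Import Order.TTheory GRing.Theory Num.Theory.
Local Open Scope ring_scope.

Inductive ofamily := OPlus | OMinus | OOdd.

Definition odim (fam : ofamily) (n : nat) : nat :=
  match fam with OPlus | OMinus => (2 * n)%N | OOdd => (2 * n).+1 end.

Section Forms.
Variable F : finFieldType.

(* Gram matrices of the forms (0-based indices).
   OPlus : sum_i (x_{2i-1} y_{2i} + x_{2i} y_{2i-1})  (pairs {0,1},{2,3},...)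
   OMinus: x1 y1 - eps x2 y2 + sum_{i>=2} (...)      (pairs {2,3},{4,5},...)
   OOdd  : x1 y1 + sum_i (x_{2i} y_{2i+1} + x_{2i+1} y_{2i}) (pairs {1,2},...) *)
Definition hyp_entry (i j : nat) : F := ((i./2 == j./2) && (i != j))%:R.

Definition gram (eps : F) (fam : ofamily) (n : nat) : 'M[F]_(odim fam n) :=
  \matrix_(i, j)
   match fam with
   | OPlus => hyp_entry i j
   | OMinus =>
       if ((i : nat) < 2)%N || ((j : nat) < 2)%N then
         (if (i == 0%N :> nat) && (j == 0%N :> nat) then 1
          else if (i == 1%N :> nat) && (j == 1%N :> nat) then - eps else 0)
       else hyp_entry i j
   | OOdd =>
       if (i == 0%N :> nat) && (j == 0%N :> nat) then 1
       else if (i == 0%N :> nat) || (j == 0%N :> nat) then 0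
       else hyp_entry i.-1 j.-1
   end.

Definition Ogrp (eps : F) (fam : ofamily) (n : nat) : {set 'M[F]_(odim fam n)} :=
  [set g | g^T *m gram eps fam n *m g == gram eps fam n].

Definition ext_entry (k : nat) (g : 'M[F]_k) (i j : nat) : F :=
  match @insub _ (fun x => (x < k)%N) _ i, @insub _ (fun x => (x < k)%N) _ j with
  | Some i', Some j' => g (i' : 'I_k) (j' : 'I_k)
  | _, _ => (i == j)%:R
  end.

(* The embedding G_n -> G_N, g |-> diag(g, Id) (iterated diag(_, Id_2)). *)
Definition emb (fam : ofamily) (n N : nat) (g : 'M[F]_(odim fam n)) : 'M[F]_(odim fam N) :=
  \matrix_(i, j) ext_entry g i j.

Definition conjugate_in (eps : F) (fam : ofamily) (N : nat) (x y : 'M[F]_(odim fam N)) : Prop :=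
  exists2 h, h \in Ogrp eps fam N & y = invmx h *m x *m h.

Definition same_type (eps : F) (fam : ofamily) (n n' : nat)
    (g : 'M[F]_(odim fam n)) (g' : 'M[F]_(odim fam n')) : Prop :=
  exists N, [/\ (n <= N)%N, (n' <= N)%N &
    @conjugate_in eps fam N (@emb fam n N g) (@emb fam n' N g')].

Definition mtsize (k : nat) (g : 'M[F]_k) : nat := \rank (g - 1%:M).

(* X_{mu,m}, as a function G_m -> Q (element of the group algebra Q[G_m]),
   where mu is represented by g : G_n. *)
Definition Xelt (eps : F) (fam : ofamily) (n : nat) (g : 'M[F]_(odim fam n)) (m : nat)
    (x : 'M[F]_(odim fam m)) : rat :=
  if (x \in Ogrp eps fam m) && `[< same_type eps x g >] then 1 else 0.

Definition conv (eps : F) (fam : ofamily) (m : nat) (f h : 'M[F]_(odim fam m) -> rat)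
    (z : 'M[F]_(odim fam m)) : rat :=
  \sum_(x in Ogrp eps fam m) f x * h (invmx x *m z).

End Forms.

Definition qint (F : finFieldType) (m : nat) : rat :=
  ((#|F|%:R ^+ m - 1) / (#|F|%:R - 1)).

(* Main.v *)
Require Import Defs.
From HB Require Import structures.
From mathcomp Require Import all_boot all_order all_algebra.
From mathcomp Require Import boolp zify lra.
Set Implicit Arguments. Unset Strict Implicit. Unset Printing Implicit Defensive.
Import Order.TTheory GRing.Theory Num.Theory.
Local Open Scope ring_scope.

Definition hp (i : nat) : nat := if odd i then i.-1 else i.+1.

Lemma hpE i : hp i = if (i %% 2 == 1)%N then i.-1 else i.+1.
Proof. by rewrite /hp modn2; case: (odd i). Qed.

Lemma hpK i : hp (hp i) = i.
Proof. rewrite (hpE i); case: ifP => /eqP h1; rewrite hpE; case: ifP => /eqP h2; lia. Qed.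

Lemma hyp_entryE (F : finFieldType) i j : hyp_entry F i j = ((j == hp i)%:R : F).
Proof.
rewrite /hyp_entry hpE -!divn2; congr (nat_of_bool _)%:R.
case: ifP => h1; apply/idP/idP.
- move/andP=> [/eqP h2 h3]; apply/eqP. lia.
- move/eqP=> ->; apply/andP; split; apply/eqP; lia.
- move/andP=> [/eqP h2 h3]; apply/eqP. lia.
- move/eqP=> ->; apply/andP; split; apply/eqP; lia.
Qed.

Definition pf (fam : ofamily) (i : nat) : nat :=
  match fam with
  | OPlus => hp i
  | OMinus => if (i < 2)%N then i else hp i
  | OOdd => if i == 0%N then 0%N else (hp i.-1).+1
  end.

Definition cf (F : finFieldType) (eps : F) (fam : ofamily) (i : nat) : F :=
  match fam with OMinus => if i == 1%N then - eps else 1 | _ => 1 end.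

Definition gf (F : finFieldType) (eps : F) (fam : ofamily) (i j : nat) : F :=
   match fam with
   | OPlus => hyp_entry F i j
   | OMinus =>
       if (i < 2)%N || (j < 2)%N then
         (if (i == 0%N) && (j == 0%N) then 1
          else if (i == 1%N) && (j == 1%N) then - eps else 0)
       else hyp_entry F i j
   | OOdd =>
       if (i == 0%N) && (j == 0%N) then 1
       else if (i == 0%N) || (j == 0%N) then 0
       else hyp_entry F i.-1 j.-1
   end.

Lemma gram_gf (F : finFieldType) (eps : F) fam n (i j : 'I_(odim fam n)) :
  gram eps fam n i j = gf eps fam i j.
Proof. by rewrite mxE. Qed.

Lemma gfE (F : finFieldType) (eps : F) fam i j :
  gf eps fam i j = if j == pf fam i then cf eps fam i else 0.
Proof.
case: fam => /=; rewrite ?hyp_entryE.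
- by case: eqP.
- case: (ltnP i 2) => hi.
    rewrite /=; case: (ltnP j 2) => hj /=.
      by case: i hi => [|[|]] //; case: j hj => [|[|]].
    by case: i hi => [|[|]] //=; rewrite ?hpE /=; case: j hj => [|[|[|]]].
  rewrite /=; case: (ltnP j 2) => hj /=.
    have : (hp i >= 2)%N by rewrite hpE; case: ifP => /eqP hh; lia.
    move=> h; rewrite (_ : (j == hp i) = false); last by apply/negbTE/eqP; lia.
    by case: i hi {h} => [|[|]] //; case: j hj => [|[|]].
  by rewrite (gtn_eqF hi); case: eqP.
- case: i => [|i] /=; case: j => [|j] //=.
  by rewrite eqSS; case: eqP.
Qed.

Lemma pfK fam i : pf fam (pf fam i) = i.
Proof.
case: fam => /=; first exact: hpK.
  case: (ltnP i 2) => hi; first by rewrite hi.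
  have : (hp i >= 2)%N by rewrite hpE; case: ifP => /eqP hh; lia.
  by move=> h; rewrite ltnNge h /= hpK.
- by case: i => [|i] //=; rewrite hpK.
Qed.

Lemma pf_lt fam n i : (i < odim fam n)%N -> (pf fam i < odim fam n)%N.
Proof.
case: fam => /=; rewrite ?hpE.
- case: ifP => /eqP h; lia.
- case: (ltnP i 2) => h; first lia. case: ifP => /eqP hh; lia.
- case: i => [|i] //= hi; case: ifP => /eqP hh; lia.
Qed.

Lemma cf_pf (F : finFieldType) (eps : F) fam i : cf eps fam (pf fam i) = cf eps fam i.
Proof.
case: fam => //=; case: (ltnP i 2) => // h.
have : (hp i >= 2)%N by rewrite hpE; case: ifP => /eqP hh; lia.
move=> h'; rewrite (_ : hp i == 1%N = false); last by apply/negbTE/eqP; lia.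
by rewrite (_ : i == 1%N = false) //; apply/negbTE/eqP; lia.
Qed.

Lemma cf_neq0 (F : finFieldType) (eps : F) fam i : eps != 0 -> cf eps fam i != 0.
Proof. by move=> he; case: fam => //=; rewrite ?oner_neq0 //; case: ifP; rewrite ?oppr_eq0 ?oner_neq0. Qed.

Section G.
Variables (F : finFieldType) (eps : F) (fam : ofamily).

Lemma gramE n (i j : 'I_(odim fam n)) :
  gram eps fam n i j = if (j : nat) == pf fam i then cf eps fam i else 0.
Proof. by rewrite gram_gf gfE. Qed.

Lemma gram_sym n : (gram eps fam n)^T = gram eps fam n.
Proof.
apply/matrixP => i j; rewrite mxE !gramE.
case: (eqP) => h1; case: eqP => h2 //; last first.
all: try (by [ rewrite h1 cf_pf | rewrite -h1 cf_pf | rewrite h2 cf_pf ]).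
all: first [ by case: h1; rewrite h2 pfK | by case: h2; rewrite h1 pfK | by case: h2; rewrite -h1 pfK | by case: h1; rewrite -h2 pfK ].
Qed.

Lemma gram_unit n : eps != 0 -> gram eps fam n \in unitmx.
Proof.
move=> he.
pose G' : 'M[F]_(odim fam n) := \matrix_(i, j) if (j : nat) == pf fam i then (cf eps fam i)^-1 else 0.
suff: gram eps fam n *m G' = 1%:M by case/mulmx1_unit.
apply/matrixP => i j; rewrite !mxE.
have hi : (pf fam i < odim fam n)%N by apply: pf_lt.
rewrite (bigD1 (Ordinal hi)) //= big1 ?addr0 => [|k hk]; last first.
  rewrite gramE; case: eqP => [e|]; last by rewrite mul0r.
  by case/eqP: hk; apply/val_inj; rewrite /= e.
rewrite gramE /= eqxx mxE pfK cf_pf.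
case: (eqP) => h; case: (eqP) => h'.
- by rewrite mulfV ?cf_neq0.
- by case: h'; apply/val_inj.
- by rewrite h' in h.
- by rewrite mulr0.
Qed.
End G.

Section Emb.
Variables (F : finFieldType).

Definition Pm k K : 'M[F]_(k, K) := \matrix_(i, j) ((i : nat) == j)%:R.

Lemma PPt k K : (k <= K)%N -> Pm k K *m (Pm k K)^T = 1%:M.
Proof.
move=> hk; apply/matrixP => i j; rewrite !mxE.
have hi : (i < K)%N by apply: leq_trans hk.
rewrite (bigD1 (Ordinal hi)) //= big1 ?addr0 => [|a ha]; last first.
  rewrite !mxE; case: eqP => [e|]; last by rewrite mul0r.
  by case/eqP: ha; apply/val_inj; rewrite /= e.
rewrite !mxE eqxx mul1r; by rewrite eq_sym.
Qed.

Lemma PtM_in k K r (Y : 'M[F]_(k, r)) (i : 'I_K) b (u : 'I_k) :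
  (u : nat) = i -> ((Pm k K)^T *m Y) i b = Y u b.
Proof.
move=> hu; rewrite !mxE (bigD1 u) //= big1 ?addr0 => [|a ha].
  by rewrite !mxE hu eqxx mul1r.
rewrite !mxE; case: eqP => [e|]; last by rewrite mul0r.
by case/eqP: ha; apply/val_inj; rewrite /= e hu.
Qed.

Lemma PtM_out k K r (Y : 'M[F]_(k, r)) (i : 'I_K) b :
  (k <= i)%N -> ((Pm k K)^T *m Y) i b = 0.
Proof.
move=> hi; rewrite !mxE big1 // => a _; rewrite !mxE.
case: eqP => [e|]; last by rewrite mul0r.
by move: (ltn_ord a); rewrite e ltnNge hi.
Qed.

Lemma MP_in k K r (Y : 'M[F]_(r, k)) a (j : 'I_K) (v : 'I_k) :
  (v : nat) = j -> (Y *m Pm k K) a j = Y a v.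
Proof.
move=> hv; rewrite !mxE (bigD1 v) //= big1 ?addr0 => [|b hb].
  by rewrite !mxE hv eqxx mulr1.
rewrite !mxE; case: eqP => [e|]; last by rewrite mulr0.
by case/eqP: hb; apply/val_inj; rewrite /= e hv.
Qed.

Lemma MP_out k K r (Y : 'M[F]_(r, k)) a (j : 'I_K) :
  (k <= j)%N -> (Y *m Pm k K) a j = 0.
Proof.
move=> hj; rewrite !mxE big1 // => b _; rewrite !mxE.
case: eqP => [e|]; last by rewrite mulr0.
by move: (ltn_ord b); rewrite e ltnNge hj.
Qed.

Lemma embE fam n N (g : 'M[F]_(odim fam n)) :
  @emb F fam n N g = 1%:M + (Pm (odim fam n) (odim fam N))^T *m (g - 1%:M) *m Pm (odim fam n) (odim fam N).
Proof.
apply/matrixP => i j; rewrite [LHS]mxE /ext_entry [RHS]mxE [1%:M i j]mxE.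
set k := odim fam n.
case: (@insubP _ (fun x => (x < k)%N) 'I_k (i : nat)) => [u hu hui|hu];
case: (@insubP _ (fun x => (x < k)%N) 'I_k (j : nat)) => [v hv hvj|hv].
- rewrite (MP_in _ _ hvj) (PtM_in _ _ hui) !mxE.
  have -> : (i == j) = (u == v).
    apply/eqP/eqP => [e|e]; apply/val_inj; [by rewrite hui hvj e | exact: (etrans (esym hui) (etrans (congr1 val e) hvj))].
  by rewrite addrC subrK.
- by rewrite MP_out ?addr0 // leqNgt.
- by rewrite (MP_in _ _ hvj) PtM_out ?addr0 // leqNgt.
- by rewrite MP_out ?addr0 // leqNgt.
Qed.
End Emb.
Lemma orth_expand (F : finFieldType) k (Bn A : 'M[F]_k) :
  (A + 1%:M)^T *m Bn *m (A + 1%:M) = Bn -> Bn *m A + A^T *m Bn + A^T *m Bn *m A = 0.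
Proof.
have -> : (A + 1%:M)^T = A^T + 1%:M by apply/matrixP => i j; rewrite !mxE eq_sym.
rewrite !mulmxDl !mulmxDr !mul1mx !mulmx1 => h.
apply: (addIr Bn); rewrite add0r; rewrite -[in RHS]h addrA; congr (_ + Bn).
by rewrite -[LHS]addrA [LHS]addrC [A^T *m Bn + _]addrC.
Qed.

Section E2.
Variables (F : finFieldType) (eps : F) (fam : ofamily).

Lemma odim_le n N : (n <= N)%N -> (odim fam n <= odim fam N)%N.
Proof. by case: fam => /=; lia. Qed.

Lemma PB n N : (n <= N)%N ->
  Pm F (odim fam n) (odim fam N) *m gram eps fam N = gram eps fam n *m Pm F (odim fam n) (odim fam N).
Proof.
move=> hnN; have hk := odim_le hnN.
apply/matrixP => i j.
have hi : (i < odim fam N)%N by apply: leq_trans hk.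
have -> : (Pm F (odim fam n) (odim fam N) *m gram eps fam N) i j = gram eps fam N (Ordinal hi) j.
  rewrite mxE (bigD1 (Ordinal hi)) //= big1 ?addr0 => [|a ha]; last first.
    rewrite !mxE; case: eqP => [e|]; last by rewrite mul0r.
    by case/eqP: ha; apply/val_inj; rewrite /= e.
  by rewrite [X in X * _]mxE eqxx mul1r.
rewrite gramE.
case: (ltnP j (odim fam n)) => hj.
  rewrite (MP_in _ _ (v := Ordinal hj)) //.
  by rewrite gramE.
rewrite MP_out //; case: eqP => // e.
have := pf_lt (ltn_ord i); rewrite /= -e => h.
by move: hj; rewrite leqNgt h.
Qed.

Lemma BPt n N : (n <= N)%N ->
  gram eps fam N *m (Pm F (odim fam n) (odim fam N))^T = (Pm F (odim fam n) (odim fam N))^T *m gram eps fam n.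
Proof.
move=> h; apply: trmx_inj; rewrite !trmx_mul !trmxK !gram_sym; exact: PB.
Qed.

Lemma emb_Ogrp n N (g : 'M[F]_(odim fam n)) : (n <= N)%N ->
  g \in Ogrp eps fam n -> @emb F fam n N g \in Ogrp eps fam N.
Proof.
move=> hnN; rewrite !inE embE => /eqP hg.
set P := Pm F _ _; set A := g - 1%:M; set Bn := gram eps fam n; set B := gram eps fam N.
have hPB : P *m B = Bn *m P by apply: PB.
have hBPt : B *m P^T = P^T *m Bn by apply: BPt.
have hPPt : P *m P^T = 1%:M by apply: PPt; apply: odim_le.
have hA : Bn *m A + A^T *m Bn + A^T *m Bn *m A = 0.
  by apply: orth_expand; rewrite /A subrK.
have -> : (1%:M + P^T *m A *m P)^T = 1%:M + P^T *m A^T *m P.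
  have trD1 k (X : 'M[F]_k) : (1%:M + X)^T = 1%:M + X^T by apply/matrixP => i j; rewrite !mxE eq_sym.
  by rewrite trD1 !trmx_mul trmxK mulmxA.
have hPB' X : P *m (B *m X) = Bn *m (P *m X) :> 'M_(_, odim fam N) by rewrite mulmxA hPB mulmxA.
have hBPt' k (X : 'M_(_, k)) : B *m (P^T *m X) = P^T *m (Bn *m X) by rewrite mulmxA hBPt mulmxA.
have hPPt' k (X : 'M_(_, k)) : P *m (P^T *m X) = X by rewrite mulmxA hPPt mul1mx.
clearbody A; rewrite !mulmxDl !mulmxDr !mul1mx !mulmx1 -!mulmxA !hBPt' hPB !hPPt'.
rewrite -addrA -{2}[B]addr0; apply/eqP; congr (B + _).
rewrite -[RHS](mul0mx _ P) -[0 in RHS](mulmx0 _ P^T) -hA.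
by rewrite !mulmxDr !mulmxDl -!mulmxA addrA.
Qed.

Lemma Pm_id k : Pm F k k = 1%:M.
Proof. by apply/matrixP => i j; rewrite !mxE. Qed.

Lemma emb_id n (g : 'M[F]_(odim fam n)) : @emb F fam n n g = g.
Proof. by rewrite embE Pm_id trmx1 mul1mx mulmx1 addrC subrK. Qed.

Lemma rank_PtYP k K (Y : 'M[F]_k) : (k <= K)%N ->
  \rank ((Pm F k K)^T *m Y *m Pm F k K) = \rank Y.
Proof.
move=> hk; apply/eqP; rewrite eqn_leq; apply/andP; split.
  apply: leq_trans; [exact: mxrankM_maxl | exact: mxrankM_maxr].
have hY : Y = Pm F k K *m ((Pm F k K)^T *m Y *m Pm F k K) *m (Pm F k K)^T.
  by rewrite !mulmxA PPt // mul1mx -mulmxA PPt // mulmx1.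
rewrite {1}hY.
apply: leq_trans; [exact: mxrankM_maxl | exact: mxrankM_maxr].
Qed.

Lemma mtsize_emb n N (g : 'M[F]_(odim fam n)) : (n <= N)%N ->
  mtsize (@emb F fam n N g) = mtsize g.
Proof.
move=> h; rewrite /mtsize embE addrAC subrr add0r rank_PtYP //; exact: odim_le.
Qed.

Lemma Ogrp_unit n (g : 'M[F]_(odim fam n)) : eps != 0 ->
  g \in Ogrp eps fam n -> g \in unitmx.
Proof.
move=> he; rewrite inE => /eqP hg.
have hB := gram_unit fam n he.
move: hB; rewrite !unitmxE !unitfE => hB.
apply/negP => /eqP h0; move: hB; rewrite -hg !det_mulmx h0 mulr0 eqxx.
by [].
Qed.

Lemma mtsize_conj k (h x : 'M[F]_k) : h \in unitmx ->
  mtsize (invmx h *m x *m h) = mtsize x.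
Proof.
move=> hu; rewrite /mtsize.
have -> : invmx h *m x *m h - 1%:M = invmx h *m (x - 1%:M) *m h.
  by rewrite mulmxBr mulmxBl mulmx1 mulVmx.
rewrite mxrankMfree ?row_free_unit //.
by rewrite eqmxMfull // row_full_unit unitmx_inv.
Qed.

Lemma same_type_size m n (x : 'M[F]_(odim fam m)) (g : 'M[F]_(odim fam n)) :
  eps != 0 -> same_type eps x g -> mtsize x = mtsize g.
Proof.
move=> he [N [hm hn [h hh e]]].
rewrite -(mtsize_emb x hm) -(mtsize_emb g hn) e mtsize_conj //.
exact: Ogrp_unit hh.
Qed.

End E2.

Section Struct.
Variables (F : fieldType) (n : nat) (B : 'M[F]_n).

Definition psi (z : 'M[F]_n) k (E : 'M[F]_(k, n)) (D : 'M[F]_(\rank ((z - 1%:M)^T)%R + k)) : 'M[F]_n :=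
  1%:M + (col_mx (row_base ((z - 1%:M)^T)) E)^T *m D *m (col_mx (row_base ((z - 1%:M)^T)) E *m B).


Lemma struct_lemma (z x : 'M[F]_n) (a b : nat) :
  B \in unitmx -> x^T *m B *m x = B -> x \in unitmx ->
  \rank (x - 1%:M) = a -> \rank (invmx x *m z - 1%:M) = b ->
  (\rank (z - 1%:M)%R <= a + b)%N /\
  exists E : 'M[F]_(a + b - \rank (z - 1%:M)%R, n), exists D, x = @psi z _ E D.
Proof.
move=> hBu hx hxu ha hb.
set A := x - 1%:M; set Y := invmx x *m z; set Bm := Y - 1%:M.
have hz : z - 1%:M = A *m Y + Bm.
  rewrite /Bm /A mulmxBl mul1mx /Y mulKVmx // addrA subrK. by [].
have hzs : ((z - 1%:M)^T <= A^T + Bm^T)%MS.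
  rewrite hz raddfD /= trmx_mul; apply: addmx_sub_adds; first exact: submxMl.
  exact: submx_refl.
have hrab : (\rank (A^T + Bm^T)%MS <= a + b)%N.
  by rewrite -ha -hb -/A -/Bm -(mxrank_tr A) -(mxrank_tr Bm) (mxrank_adds_leqif _ _).1.
set Wt := row_base ((z - 1%:M)^T).
have hl : \rank Wt = \rank (z - 1%:M) by rewrite (eq_row_base _) mxrank_tr.
split.
  by rewrite -mxrank_tr (leq_trans (mxrankS hzs)).
set k := (a + b - \rank (z - 1%:M)%R)%N.
set X := (A^T :\: Wt)%MS.
have hWs : (Wt <= A^T + Bm^T)%MS by rewrite (eq_row_base _).
have hAWs : (A^T + Wt <= A^T + Bm^T)%MS by rewrite addsmx_sub addsmxSl hWs.
have hXk : (\rank X <= k)%N.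
  have h1 := mxrank_cap_compl A^T Wt.
  have h2 := mxrank_sum_cap A^T Wt.
  have h3 := mxrankS hAWs.
  rewrite /k /X -hl; lia.
set E : 'M[F]_(k, n) := pid_mx (\rank X) *m row_ebase X.
have hXE : (X <= E)%MS.
  rewrite -{1}(mulmx_ebase X) -(@pid_mx_id _ n k n (\rank X) hXk) !mulmxA -mulmxA.
  exact: submxMl.
set N := col_mx Wt E.
have hAN : (A^T <= N)%MS.
  rewrite /N -addsmxE -{1}(addsmx_diff_cap_eq A^T Wt).
  rewrite -/X addsmxC; apply: addsmxS; first exact: capmxSr.
  exact: hXE.
set C := A^T *m pinvmx N.
have hC : C *m N = A^T by rewrite mulmxKpV.
have hA1 : A = N^T *m C^T by rewrite -trmx_mul hC trmxK.
have hCT : C^T = (pinvmx N)^T *m A by rewrite /C trmx_mul trmxK.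
clearbody C.
have hxB : x^T *m B *m A = - (A^T *m B).
  rewrite /A mulmxBr hx mulmx1.
  have -> : (x - 1%:M)^T = x^T - 1%:M by apply/matrixP => i j; rewrite !mxE eq_sym.
  by rewrite mulmxBl mul1mx opprB.
have hxBu : x^T *m B \in unitmx by rewrite unitmx_mul unitmx_tr hxu hBu.
have hAsub : (A <= N *m B)%MS.
  have -> : A = (- (invmx (x^T *m B) *m C)) *m (N *m B).
    by rewrite mulNmx -!mulmxA [C *m _]mulmxA hC -mulmxN -hxB mulKmx.
  exact: submxMl.
exists E; exists ((pinvmx N)^T *m (A *m pinvmx (N *m B))).
rewrite /psi -/Wt -/N.
have -> : N^T *m ((pinvmx N)^T *m (A *m pinvmx (N *m B))) *m (N *m B) = A.
  have hK := mulmxKpV hAsub.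
  move: (pinvmx (N *m B)) hK => Q hK.
  rewrite -mulmxA -mulmxA hK.
  by rewrite -hCT -hA1.
by rewrite /A addrC subrK.
Qed.
End Struct.

Section Count.
Variables (F : finFieldType) (eps : F) (fam : ofamily) (he : eps != 0).
Variables (a : nat) (mu : 'M[F]_(odim fam a)) (b : nat) (nu : 'M[F]_(odim fam b)).

Lemma summand_ge0 m (z x : 'M[F]_(odim fam m)) :
  0 <= @Xelt F eps fam a mu m x * @Xelt F eps fam b nu m (invmx x *m z).
Proof. by rewrite /Xelt; do 2 case: ifP => _; rewrite ?mulr1 ?mulr0 ?mul0r. Qed.

Lemma summand_le1 m (z x : 'M[F]_(odim fam m)) :
  @Xelt F eps fam a mu m x * @Xelt F eps fam b nu m (invmx x *m z) <= 1.
Proof. by rewrite /Xelt; do 2 case: ifP => _; rewrite ?mulr1 ?mulr0 ?mul0r. Qed.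

Lemma summand_struct m (z x : 'M[F]_(odim fam m)) :
  z \in Ogrp eps fam m -> x \in Ogrp eps fam m ->
  @Xelt F eps fam a mu m x * @Xelt F eps fam b nu m (invmx x *m z) != 0 ->
  (mtsize z <= mtsize mu + mtsize nu)%N /\
  exists E : 'M[F]_(mtsize mu + mtsize nu - \rank (z - 1%:M)%R, odim fam m), exists D,
    x = @psi F _ (gram eps fam m) z _ E D.
Proof.
move=> hz hx; rewrite /Xelt.
case: ifP => [/andP [_ /asboolP h1]|]; last by rewrite mul0r eqxx.
case: ifP => [/andP [_ /asboolP h2]|]; last by rewrite mulr0 eqxx.
move=> _.
have ha := same_type_size he h1.
have hb := same_type_size he h2.
apply: struct_lemma.
- exact: gram_unit.
- by move: hx; rewrite inE => /eqP.
- exact: Ogrp_unit hx.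
- exact: ha.
- exact: hb.
Qed.
Lemma conv_bound m (z : 'M[F]_(odim fam m)) : z \in Ogrp eps fam m ->
  let k := (mtsize mu + mtsize nu - \rank (z - 1%:M)%R)%N in
  let s := (\rank ((z - 1%:M)^T)%R + k)%N in
  [/\ 0 <= @conv F eps fam m (@Xelt F eps fam a mu m) (@Xelt F eps fam b nu m) z,
     @conv F eps fam m (@Xelt F eps fam a mu m) (@Xelt F eps fam b nu m) z
       <= (#|F| ^ (k * odim fam m + s * s))%:R &
     ((mtsize mu + mtsize nu < mtsize z)%N ->
       @conv F eps fam m (@Xelt F eps fam a mu m) (@Xelt F eps fam b nu m) z = 0)].
Proof.
move=> hz k s; rewrite /conv; split.
- by apply: sumr_ge0 => x _; apply: summand_ge0.
- pose T := [set (@psi F _ (gram eps fam m) z k p.1 p.2) | p in [set: 'M[F]_(k, odim fam m) * 'M[F]_s]].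
  apply: (@le_trans _ _ (\sum_(x in Ogrp eps fam m) ((x \in T)%:R : rat))).
    apply: ler_sum => x hx.
    have [->|hnz] := eqVneq (@Xelt F eps fam a mu m x * @Xelt F eps fam b nu m (invmx x *m z)) 0.
      by rewrite ler0n.
    have [_ [E [D hxe]]] := summand_struct hz hx hnz.
    have -> : x \in T.
      by apply/imsetP; exists (E, D); rewrite ?inE.
    exact: summand_le1.
  apply: (@le_trans _ _ (\sum_(x : 'M[F]_(odim fam m)) ((x \in T)%:R : rat))).
    rewrite [X in _ <= X](bigID (mem (Ogrp eps fam m))) /= lerDl.
    by apply: sumr_ge0 => x _; rewrite ler0n.
  have -> : \sum_(x : 'M[F]_(odim fam m)) ((x \in T)%:R : rat) = #|T|%:R.
    rewrite (eq_bigr (fun x => if x \in T then 1 else 0)); last by move=> x _; case: (x \in T).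
    by rewrite -big_mkcond sumr_const.
  rewrite ler_nat (leq_trans (leq_imset_card _ _)) // cardsT card_prod !card_mx expnD.
  by [].
- move=> hlt; apply: big1 => x hx.
  apply/eqP; apply: contraLR hlt => hnz.
  have [h _] := summand_struct hz hx hnz.
  by rewrite -leqNgt.
Qed.

End Count.

Lemma poly_lower (r : {poly rat}) : r != 0 ->
  exists M : rat, 1 <= M /\ forall x, M <= x ->
    `|lead_coef r| / 2 * x ^+ (size r).-1 <= `|r.[x]|.
Proof.
move=> hr.
have hs : size r = (size r).-1.+1 by rewrite prednK // size_poly_gt0.
set d := (size r).-1 in hs *.
set Sm := \sum_(i < d) `|r`_i|.
set lc := `|lead_coef r|.
have hlc : 0 < lc by rewrite normr_gt0 lead_coef_eq0.
have hSm : 0 <= Sm by apply: sumr_ge0 => i _.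
have hq : 0 <= 2 * Sm / lc by apply: divr_ge0; [apply: mulr_ge0 | apply: ltW].
exists (1 + 2 * Sm / lc); split; first lra.
move=> x hx.
have hx1 : 1 <= x by lra.
have hx2 : 2 * Sm <= lc * x.
  have : 2 * Sm / lc <= x by lra.
  by rewrite ler_pdivrMr // [x * _]mulrC.
set X := x ^+ d.
have hX : 0 <= X by apply: exprn_ge0; lra.
rewrite horner_coef hs big_ord_recr /= -/d.
set sm := \sum_(i < d) _.
have h1 : `|sm| * x <= Sm * X.
  apply: (@le_trans _ _ ((\sum_(i < d) `|r`_i| * x ^+ i) * x)).
    apply: ler_wpM2r; first lra.
    apply: le_trans (ler_norm_sum _ _ _) _; apply: ler_sum => i _.
    rewrite normrM normrX [`|x|]ger0_norm //; lra.
  rewrite !mulr_suml; apply: ler_sum => i _.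
  rewrite -mulrA -exprSr; apply: ler_wpM2l => //.
  by apply: ler_weXn2l.
have hlcd : lc = `|r`_d| by rewrite /lc lead_coefE.
have h3 : lc * X - `|sm| <= `|sm + r`_d * x ^+ d|.
  have := lerB_normD (r`_d * x ^+ d) sm.
  rewrite normrM normrX [`|x|]ger0_norm; last lra.
  rewrite [sm + _]addrC -/X -hlcd; lra.
rewrite -/X.
nra.
Qed.

Lemma large_x (xs : nat -> rat) (M0 : nat) (B : rat) :
  (forall m, m%:R <= xs m) -> exists m, (M0 <= m)%N /\ B < xs m.
Proof.
move=> hxs; set B0 := `|B|.
have hb := @archi_boundP _ B0 (normr_ge0 _).
exists (maxn M0 (Num.Def.archi_bound B0)); split; first exact: leq_maxl.
apply: le_lt_trans (ler_norm B) _; apply: lt_le_trans hb _.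
apply: le_trans (hxs _); rewrite ler_nat; exact: leq_maxr.
Qed.

Lemma deg_bound (r : {poly rat}) (e : nat) (K : rat) (xs : nat -> rat) (M0 : nat) :
  r != 0 -> (forall m, m%:R <= xs m) ->
  (forall m, (M0 <= m)%N -> `|r.[xs m]| <= K * xs m ^+ e) -> ((size r).-1 <= e)%N.
Proof.
move=> hr hxs hb; have [M [hM1 hM]] := poly_lower hr.
set lc := `|lead_coef r|.
have hlc : 0 < lc by rewrite normr_gt0 lead_coef_eq0.
have [m [hm hB]] := large_x M0 (M + `|2 * K / lc|) hxs.
set x := xs m in hB.
have hK : 2 * K / lc <= `|2 * K / lc| := ler_norm _.
have hn0 : 0 <= `|2 * K / lc| := normr_ge0 _.
have hxM : M <= x by lra.
have hxK : 2 * K < lc * x.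
  have : 2 * K / lc < x by lra.
  by rewrite ltr_pdivrMr // [x * _]mulrC.
have h1 := hM _ hxM; have h2 := hb _ hm; rewrite -/x in h2.
rewrite leqNgt; apply/negP => hlt.
have hx1 : 1 <= x by lra.
have hXe : 0 < x ^+ e by apply: exprn_gt0; lra.
have hXd : x ^+ e * x <= x ^+ (size r).-1.
  by rewrite -exprSr; apply: ler_weXn2l.
have p1 : lc * (x ^+ e * x) <= lc * x ^+ (size r).-1 by apply: ler_wpM2l; lra.
have p2 : 0 < x ^+ e * (lc * x - 2 * K) by apply: mulr_gt0; lra.
rewrite -/lc in h1; lra.
Qed.

Lemma deg_zero (r : {poly rat}) (xs : nat -> rat) (M0 : nat) :
  (forall m, m%:R <= xs m) ->
  (forall m, (M0 <= m)%N -> r.[xs m] = 0) -> r = 0.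
Proof.
move=> hxs hz; apply/eqP; apply/negP => /negP hr.
have [M [hM1 hM]] := poly_lower hr.
have hlc : 0 < `|lead_coef r| by rewrite normr_gt0 lead_coef_eq0.
have [m [hm hB]] := large_x M0 M hxs.
have h1 := hM _ (ltW hB); rewrite hz // normr0 in h1.
have hXe : 0 < xs m ^+ (size r).-1 by apply: exprn_gt0; lra.
nra.
Qed.

Section Q.
Variable F : finFieldType.
Let q : rat := #|F|%:R.

Lemma q_ge2 : 2 <= q.
Proof.
rewrite /q ler_nat.
apply/card_gt1P; exists 0, 1; split => //; rewrite eq_sym; exact: oner_neq0.
Qed.

Lemma qint_ge m : m%:R <= qint F m.
Proof.
have hq := q_ge2.
rewrite /qint -/q ler_pdivlMr; last lra.
elim: m => [|m IH]; first by rewrite expr0 subrr mul0r.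
rewrite exprS -natr1.
have : 1 <= q ^+ m by apply: exprn_ege1; lra.
nra.
Qed.

Lemma qpow_le m : (1 <= m)%N -> q ^+ m <= q * qint F m.
Proof.
move=> hm; have hq := q_ge2.
have h1 : 1 <= qint F m by apply: le_trans (qint_ge m); rewrite ler1n.
have h2 : (q - 1) * qint F m = q ^+ m - 1.
  by rewrite /qint -/q mulrC divfK //; apply/eqP => h; lra.
lra.
Qed.
Lemma pow_to_x k s m N : (1 <= m)%N -> (N <= k * (2 * m + 1) + s)%N ->
  (#|F| ^ N)%:R <= (q ^+ (k + s) * q ^+ (2 * k)) * (qint F m) ^+ (2 * k).
Proof.
move=> hm hN; have hq := q_ge2.
rewrite natrX -/q.
apply: (@le_trans _ _ (q ^+ (k * (2 * m + 1) + s))).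
  by apply: ler_weXn2l => //; lra.
have -> : (k * (2 * m + 1) + s = (k + s) + m * (2 * k))%N by lia.
rewrite exprD exprM -mulrA; apply: ler_wpM2l; first by apply: exprn_ge0; lra.
rewrite -exprMn; apply: lerXn2r; rewrite ?inE.
- by apply: exprn_ge0; lra.
- by apply: mulr_ge0; [lra | apply: le_trans (qint_ge m); apply: ler0n].
- exact: qpow_le.
Qed.
End Q.

Unset Implicit Arguments.

Theorem lemma8p21 (F : finFieldType) (hF : 2%N \notin [pchar F])
  (eps : F) (heps : forall y : F, y ^+ 2 != eps) (fam : ofamily)
  (a : nat) (mu : 'M[F]_(odim fam a)) (hmu : mu \in Ogrp eps fam a)
  (b : nat) (nu : 'M[F]_(odim fam b)) (hnu : nu \in Ogrp eps fam b)
  (c : nat) (la : 'M[F]_(odim fam c)) (hla : la \in Ogrp eps fam c)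
  (r : {poly rat})
  (hr : forall (m : nat) (z : 'M[F]_(odim fam m)),
      (0 < m)%N -> z \in Ogrp eps fam m -> @same_type F eps fam m c z la ->
      @conv F eps fam m (@Xelt F eps fam a mu m) (@Xelt F eps fam b nu m) z = r.[qint F m]) :
  r != 0 ->
  ((size r)%:Z - 1 <= 2 * ((mtsize mu)%:Z + (mtsize nu)%:Z - (mtsize la)%:Z))%R.
Proof.
move=> hr0.
have he : eps != 0.
  apply/eqP => e; move: (heps 0); rewrite e expr2 mul0r eqxx. by [].
set l := mtsize la; set a' := mtsize mu; set b' := mtsize nu.
set M0 := maxn c 1.
have hz : forall m, (M0 <= m)%N ->
   [/\ @emb F fam c m la \in Ogrp eps fam m, mtsize (@emb F fam c m la) = l &
     @conv F eps fam m (@Xelt F eps fam a mu m) (@Xelt F eps fam b nu m) (@emb F fam c m la) = r.[qint F m]].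
  move=> m hm.
  have hcm : (c <= m)%N by apply: leq_trans hm; apply: leq_maxl.
  have h1m : (0 < m)%N by apply: leq_trans hm; apply: leq_maxr.
  have zO : @emb F fam c m la \in Ogrp eps fam m by apply: emb_Ogrp.
  split => //; first exact: mtsize_emb.
  apply: hr => //.
  exists m; split => //.
  exists 1%:M; first by rewrite inE trmx1 mul1mx mulmx1.
  by rewrite emb_id invmx1 mul1mx mulmx1.
have hsz : (0 < size r)%N by rewrite size_poly_gt0.
case: (leqP l (a' + b')) => hl; last first.
  exfalso; move/eqP: hr0; apply.
  apply: (@deg_zero r (qint F) M0 (qint_ge F)) => m hm.
  have [zO zs zc] := hz m hm.
  rewrite -zc.
  have [_ _ h0] := conv_bound he mu nu zO.
  by apply: h0; rewrite zs.
set k := (a' + b' - l)%N.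
set q : rat := #|F|%:R.
have key : ((size r).-1 <= 2 * k)%N.
  apply: (@deg_bound r (2 * k) (q ^+ (k + (l + k) * (l + k)) * q ^+ (2 * k)) (qint F) M0 hr0 (qint_ge F)).
  move=> m hm; have [zO zs zc] := hz m hm.
  rewrite -zc.
  have [c0 c1 _] := conv_bound he mu nu zO.
  rewrite ger0_norm //; apply: le_trans c1 _.
  have hrk : \rank (@emb F fam c m la - 1%:M) = l by [].
  rewrite mxrank_tr hrk -/a' -/b' -/k.
  apply: pow_to_x; first by apply: leq_trans hm; apply: leq_maxr.
  rewrite leq_add2r leq_mul2l; apply/orP; right.
  have ho : forall f, (odim f m <= 2 * m + 1)%N by case => /=; lia.
  exact: ho.
lia.
Qed.
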